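(* Let $\Delta$ be a shellable simplicial complex on $[n]$ with $\dim\Delta\le n-3$, with shelling $F_1,\dots,F_q$, and let $F=F_q$ be the last facet. Let $\Delta_F$ be the simplicial complex on $F\cup\{v\}$ ($v$ a new vertex) whose facets are: (A) the sets $F_i\cap F$ maximal among $\{F_i\cap F: F\not\subseteq F_i,\ F_i\cup F\neq[n]\}$, and (B) the sets $(F_i\cap F)\cup\{v\}$ for facets $F_i$ with $F_i\cup F=[n]$. Then $\Delta_F$ is shellable. Moreover, there is a shelling of $\Delta_F$ such that for every facet of type (B), $\widetilde F_i=(F_i\cap F)\cup\{v\}$, one has $\widetilde G_i=G_i\cap F$, where $\widetilde G_i$ is computed in $\Delta_F$ with respect to this shelling and $G_i$ in $\Delta$ with respect to $F_1,\dots,F_q$.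
   Context: A shelling is an ordering $F_1,\dots,F_q$ of all facets such that for each $k\ge2$, $(\bigcup_{i<k}2^{F_i})\cap2^{F_k}$ is pure of dimension $\dim F_k-1$; a complex is shellable if it has one. A wall of a facet is a codimension-one face of it. For a shelling $F_1,\dots,F_q$, set $G_1=F_1$ and for $i\ge2$ let $G_i$ be the intersection of all walls of $F_i$ lying in the subcomplex generated by $F_1,\dots,F_{i-1}$. *)

(* Defs.v *)
From mathcomp Require Import all_boot all_order all_algebra.
Set Implicit Arguments. Unset Strict Implicit. Unset Printing Implicit Defensive.
Import GRing.Theory Num.Theory.

Section Complexes.
Variable T : finType.

Definition is_complex (D : {set {set T}}) : Prop :=
  forall A B : {set T}, B \subset A -> A \in D -> B \in D.

Definition facets (D : {set {set T}}) : {set {set T}} :=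
  [set A in D | [forall B in D, (A \subset B) ==> (B == A)]].

Definition fdim (A : {set T}) : int := (#|A|%:Z - 1)%R.

Definition pure_of_dim (D : {set {set T}}) (d : int) : Prop :=
  forall A, A \in facets D -> fdim A = d.

Definition gen (s : seq {set T}) : {set {set T}} :=
  [set A : {set T} | has (fun F : {set T} => A \subset F) s].

Definition gen_set (S : {set {set T}}) : {set {set T}} :=
  [set A : {set T} | [exists B in S, A \subset B]].

(* shelling condition on an ordered list of facets (0-indexed: facet k,
   k >= 1, against the subcomplex generated by facets 0..k-1) *)
Definition shelling_cond (s : seq {set T}) : Prop :=
  forall k, 0 < k < size s ->
    pure_of_dim (gen (take k s) :&: powerset (nth set0 s k))
                (fdim (nth set0 s k) - 1)%R.

Definition is_shelling (D : {set {set T}}) (s : seq {set T}) : Prop :=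
  [/\ uniq s, (forall A, (A \in s) = (A \in facets D)) & shelling_cond s].

Definition shellable (D : {set {set T}}) : Prop := exists s, is_shelling D s.

(* G_k: intersection of all walls of F_k lying in the subcomplex generated
   by the earlier facets (for k = 0 this is F_0 itself). *)
Definition Gset (s : seq {set T}) (k : nat) : {set T} :=
  let Fk := nth set0 s k in
  Fk :&: \bigcap_(x in Fk | (Fk :\ x) \in gen (take k s)) (Fk :\ x).

End Complexes.

(* The complex Delta_F on vertex type option 'I_n (the new vertex v is None,
   old vertex x is Some x), where F is the last facet of the shelling s. *)
Section DeltaF.
Variable n : nat.
Variable s : seq {set 'I_n}.

Definition lastF : {set 'I_n} := last set0 s.

Definition typeA_family : {set {set 'I_n}} :=
  [set Fi :&: lastF | Fi : {set 'I_n} in [set Fi : {set 'I_n} in s | (~~ (lastF \subset Fi)) && (Fi :|: lastF != setT)]].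

Definition typeA : {set {set option 'I_n}} :=
  [set (Some @: A) | A : {set 'I_n} in facets typeA_family].

Definition tildeF (Fi : {set 'I_n}) : {set option 'I_n} :=
  None |: (Some @: (Fi :&: lastF)).

Definition typeB : {set {set option 'I_n}} :=
  [set tildeF Fi | Fi : {set 'I_n} in [set Fi : {set 'I_n} in s | Fi :|: lastF == setT]].

Definition DeltaF : {set {set option 'I_n}} := gen_set (typeA :|: typeB).

End DeltaF.

(* Main.v *)
Require Import Defs.
From mathcomp Require Import all_boot all_order all_algebra zify.
Import GRing.Theory Num.Theory.
Set Implicit Arguments. Unset Strict Implicit.

Lemma gen_mem (T : finType) (B : {set T}) (s : seq {set T}) :
  (B \in gen s) = has (fun F : {set T} => B \subset F) s.
Proof. by rewrite /gen inE. Qed.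

Lemma genP (T : finType) (B : {set T}) (s : seq {set T}) :
  reflect (exists2 C, C \in s & B \subset C) (B \in gen s).
Proof. rewrite gen_mem; exact: hasP. Qed.

Lemma GsetE (T : finType) (s : seq {set T}) k :
  Gset s k = [set x in nth set0 s k | (nth set0 s k :\ x) \notin gen (take k s)].
Proof.
apply/setP => z; rewrite /Gset in_setI in_set.
case zA: (z \in nth set0 s k) => //=.
apply/bigcapP/idP.
- move=> H; apply/negP => Hg.
  by move: (H z); rewrite zA Hg => /(_ isT); rewrite !inE eqxx.
- move=> Hn x /andP[xA Hx]; rewrite !inE zA andbT.
  by apply/eqP => zx; subst; rewrite Hx in Hn.
Qed.

Lemma facet_above (T : finType) (I : {set {set T}}) B :
  B \in I -> exists C, C \in facets I /\ B \subset C.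
Proof.
move=> BI.
have P0 : (B \in I) && (B \subset B) by rewrite BI subxx.
case: (@arg_maxnP _ B (fun C : {set T} => (C \in I) && (B \subset C)) (fun C : {set T} => #|C|) P0) => C /andP[CI BC] Hmax.
exists C; split => //; rewrite /facets inE CI /=.
apply/forallP => C'; apply/implyP => C'I; apply/implyP => CC'.
have le : #|C'| <= #|C| by apply: (Hmax C'); rewrite C'I (subset_trans BC CC').
by rewrite eq_sym eqEcard CC' le.
Qed.

Lemma card_wall (T : finType) (A C : {set T}) :
  C \subset A -> #|C|.+1 = #|A| -> exists2 z, z \in A & C = A :\ z.
Proof.
move=> CA hc.
have : C \proper A by rewrite properEcard CA -hc leqnn.
case/properP => _ [z zA zC]; exists z => //.
apply/eqP; rewrite eqEcard; apply/andP; split.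
  apply/subsetP => w wC; rewrite !inE (subsetP CA w wC) andbT.
  by apply/eqP => wz; subst; rewrite wC in zC.
by move: (cardsD1 z A); rewrite zA; lia.
Qed.

Lemma pureL (T : finType) (G : {set {set T}}) (A : {set T}) :
  A \notin G ->
  (forall B, B \in G -> B \subset A ->
     exists y, [/\ y \in A, B \subset A :\ y & A :\ y \in G]) ->
  pure_of_dim (G :&: powerset A) (fdim A - 1)%R.
Proof.
move=> AG H C; rewrite /facets inE => /andP[]; rewrite inE powersetE => /andP[CG CA].
move=> /forallP Hm.
case: (H C CG CA) => y [yA Cy yG].
have := Hm (A :\ y); rewrite inE powersetE yG subsetDl Cy /= => /eqP <-.
rewrite /fdim; move: (cardsD1 y A); rewrite yA => ->. lia.
Qed.

Lemma wallL (T : finType) (s : seq {set T}) j B :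
  shelling_cond s -> 0 < j < size s -> B \in gen (take j s) -> B \subset nth set0 s j ->
  exists z, [/\ z \in nth set0 s j, B \subset nth set0 s j :\ z &
                (nth set0 s j :\ z) \in gen (take j s)].
Proof.
move=> sh hj BG BA.
have BI : B \in gen (take j s) :&: powerset (nth set0 s j) by rewrite inE BG powersetE BA.
case: (facet_above BI) => C [Cf BC].
have := sh j hj C Cf; rewrite /fdim => hd.
move: Cf; rewrite /facets inE => /andP[]; rewrite inE powersetE => /andP[CG CA] _.
have hc : #|C|.+1 = #|nth set0 s j| by lia.
case: (card_wall CA hc) => z zA Ce; exists z; split => //; by rewrite -Ce.
Qed.

Lemma nth_notin_take (T : eqType) (x0 : T) (s : seq T) i :
  uniq s -> i < size s -> nth x0 s i \notin take i s.
Proof.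
move=> us hi; move: us; rewrite -{1}(cat_take_drop i s) (drop_nth x0 hi) cat_uniq.
by case/and3P => _ /hasPn H _; apply: H; rewrite inE eqxx.
Qed.

Lemma take_filter_index (T : eqType) (x0 : T) (p : pred T) (s : seq T) i :
  uniq s -> i < size s -> p (nth x0 s i) ->
  take (index (nth x0 s i) (filter p s)) (filter p s) = filter p (take i s).
Proof.
move=> us hi pi.
have nin := nth_notin_take x0 us hi.
have es : s = take i s ++ nth x0 s i :: drop i.+1 s by rewrite -(drop_nth x0 hi) cat_take_drop.
move: nin pi; set x := nth x0 s i => nin pi.
have nin' : x \notin filter p (take i s) by rewrite mem_filter negb_and nin orbT.
rewrite [in filter p s]es filter_cat /= pi index_cat (negbTE nin') /= eqxx addn0.
by rewrite take_cat ltnn subnn take0 cats0.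
Qed.

Lemma inSome n (z : 'I_n) (X : {set 'I_n}) : (Some z \in Some @: X) = (z \in X).
Proof. by rewrite mem_imset //; move=> a b []. Qed.

Lemma NoneSome n (X : {set 'I_n}) : (None \in Some @: X) = false.
Proof. by apply/imsetP; case. Qed.

Lemma facets_gen_set (T : finType) (S : {set {set T}}) :
  (forall A B, A \in S -> B \in S -> A \subset B -> A = B) ->
  forall A, (A \in facets (gen_set S)) = (A \in S).
Proof.
move=> anti A; rewrite /facets inE; apply/idP/idP.
- case/andP; rewrite inE => /existsP[B /andP[BS AB]] /forallP /(_ B).
  have -> : B \in gen_set S by rewrite inE; apply/existsP; exists B; rewrite BS subxx.
  by rewrite AB /= => /eqP <-.
- move=> AS; apply/andP; split.
    by rewrite inE; apply/existsP; exists A; rewrite AS subxx.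
  apply/forallP => B; apply/implyP; rewrite inE => /existsP[C /andP[CS BC]].
  apply/implyP => AB.
  have AC := anti _ _ AS CS (subset_trans AB BC); subst C.
  by rewrite eqEsubset BC AB.
Qed.

Section Main.
Variables (n : nat) (D : {set {set 'I_n}}) (s : seq {set 'I_n}).
Hypotheses (Dc : is_complex D) (Hsh : is_shelling D s) (sn : s != [::])
  (Hdim : forall A, A \in D -> (fdim A <= n%:Z - 3)%R).

Local Notation F := (lastF s).
Local Notation q := (size s).

Lemma us : uniq s. Proof. by case: Hsh. Qed.
Lemma shs : shelling_cond s. Proof. by case: Hsh. Qed.
Lemma sfacet A : A \in s -> A \in facets D. Proof. by case: Hsh => _ ->. Qed.

Lemma santi A B : A \in s -> B \in s -> A \subset B -> A = B.
Proof.
move=> /sfacet; rewrite /facets inE => /andP[AD /forallP H] /sfacet.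
rewrite inE => /andP[BD _] AB.
by have := H B; rewrite BD AB /= => /eqP.
Qed.

Lemma ssize A : A \in s -> #|A| + 2 <= n.
Proof.
move=> /sfacet; rewrite inE => /andP[AD _]; have := Hdim AD; rewrite /fdim.
move=> h; have : (#|A|%:Z <= n%:Z - 2)%R by lia.
lia.
Qed.

Lemma qpos : 0 < q. Proof. by case: s sn. Qed.

Lemma Fnth : nth set0 s q.-1 = F.
Proof. by rewrite /lastF nth_last. Qed.

Lemma Fin : F \in s.
Proof. by rewrite -Fnth mem_nth // prednK // qpos. Qed.

Lemma es : s = take q.-1 s ++ [:: F].
Proof.
have h : q.-1 < q by rewrite prednK // qpos.
by rewrite -{1}(cat_take_drop q.-1 s) (drop_nth set0 h) Fnth prednK ?qpos // drop_size.
Qed.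

Lemma cardT' : #|[set: 'I_n]| = n. Proof. by rewrite cardsT card_ord. Qed.

Lemma cardUn (A B : {set 'I_n}) : A :|: B = setT -> #|A| + #|B| = n + #|A :&: B|.
Proof. by move=> h; rewrite -cardsUI h cardT'. Qed.

Lemma B_small (Fi : {set 'I_n}) : Fi \in s -> Fi :|: F = setT -> #|Fi :&: F| + 2 <= #|F|.
Proof. move=> Fis h; have := cardUn h; have := ssize Fis; lia. Qed.

Lemma B_neF (Fi : {set 'I_n}) : Fi :|: F = setT -> Fi != F.
Proof.
move=> h; apply/eqP => e; subst; move: (cardUn h); rewrite setIid.
have := ssize Fin; lia.
Qed.

Lemma inTake Fj : Fj \in s -> Fj != F -> Fj \in take q.-1 s.
Proof. by move=> Fjs neq; move: Fjs; rewrite {1}es mem_cat inE (negbTE neq) orbF. Qed.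

Definition W : {set 'I_n} := [set x in F | (F :\ x) \in gen (take q.-1 s)].

Lemma c2 Fj : Fj \in s -> Fj != F -> exists2 x, x \in W & Fj :&: F \subset F :\ x.
Proof.
move=> Fjs neq; have Ft := inTake Fjs neq.
have hq : 0 < q.-1 < q.
  apply/andP; split; last by rewrite prednK // qpos.
  by move: Ft; case: (q.-1) => //; rewrite take0.
have BG : Fj :&: F \in gen (take q.-1 s) by apply/genP; exists Fj => //; exact: subsetIl.
have := wallL shs hq BG; rewrite Fnth => /(_ (subsetIr _ _)) [z [zF sub zG]].
by exists z => //; rewrite inE zF zG.
Qed.

Lemma c1 x : x \in W -> exists2 Fj, Fj \in s &
  [/\ ~~ (F \subset Fj), Fj :|: F != setT & Fj :&: F = F :\ x].
Proof.
rewrite inE => /andP[xF /genP[Fj Fjt sub]].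
have Fjs : Fj \in s by rewrite es mem_cat Fjt.
have nFj : Fj != F.
  apply/eqP => e; have hq : q.-1 < q by rewrite prednK // qpos.
  by have := nth_notin_take set0 us hq; rewrite Fnth -e Fjt.
have xFj : x \notin Fj.
  apply/negP => xj; move/negP: nFj; apply; apply/eqP; symmetry; apply: santi Fin Fjs _.
  apply/subsetP => w wF; case: (eqVneq w x) => [->//|wx].
  by apply: (subsetP sub); rewrite !inE wx wF.
exists Fj => //; split.
- by apply/negP => /subsetP /(_ x xF); rewrite (negbTE xFj).
- apply/eqP => e; have : Fj :|: F \subset x |: Fj.
    apply/subsetP => w; rewrite !inE; case/orP => [->|wF]; first by rewrite orbT.
    by case: (eqVneq w x) => //= wx; apply: (subsetP sub); rewrite !inE wx wF.
  move/subset_leq_card; rewrite e cardT' cardsU1 (negbTE xFj).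
  have := ssize Fjs; lia.
- apply/eqP; rewrite eqEsubset; apply/andP; split; apply/subsetP => w; rewrite !inE.
  + by case/andP => wj ->; rewrite andbT; apply/eqP => e; subst; rewrite wj in xFj.
  + by case/andP => wx wF; rewrite wF andbT; apply: (subsetP sub); rewrite !inE wx.
Qed.

Lemma famP A : reflect (exists2 Fj, Fj \in s & [/\ ~~ (F \subset Fj), Fj :|: F != setT & A = Fj :&: F])
  (A \in typeA_family s).
Proof.
apply: (iffP imsetP).
- by case=> Fj; rewrite inE => /andP[Fjs /andP[h1 h2]] ->; exists Fj.
- by case=> Fj Fjs [h1 h2 ->]; exists Fj => //; rewrite inE Fjs h1 h2.
Qed.

Lemma WF x : x \in W -> x \in F. Proof. by rewrite inE => /andP[]. Qed.

Lemma wall_inj (x y : 'I_n) : x \in F -> y \in F -> F :\ x \subset F :\ y -> x = y.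
Proof.
move=> xF yF /subsetP /(_ y); rewrite !inE eqxx yF andbT /=.
by case: (eqVneq y x) => // _ /(_ isT).
Qed.

Lemma fam_sub A : A \in typeA_family s -> exists2 x, x \in W & A \subset F :\ x.
Proof.
case/famP => Fj Fjs [h1 h2 ->]; apply: c2 => //.
by apply/negP => /eqP e; rewrite e subxx in h1.
Qed.

Lemma wall_fam x : x \in W -> F :\ x \in typeA_family s.
Proof. by move=> xW; case: (c1 xW) => Fj Fjs [h1 h2 e]; apply/famP; exists Fj. Qed.

Lemma facets_fam A : (A \in facets (typeA_family s)) = (A \in [set F :\ x | x in W]).
Proof.
rewrite /facets inE; apply/idP/idP.
- case/andP => Af /forallP Hm; case: (fam_sub Af) => x xW Ax.
  have := Hm (F :\ x); rewrite wall_fam // Ax /= => /eqP <-.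
  exact: imset_f.
- case/imsetP => x xW ->; rewrite wall_fam //=; apply/forallP => B; apply/implyP => Bf.
  apply/implyP => xB; case: (fam_sub Bf) => y yW By.
  have e := wall_inj (WF xW) (WF yW) (subset_trans xB By); subst y.
  by rewrite eqEsubset By xB.
Qed.

Lemma typeAE : typeA s = [set Some @: (F :\ x) | x in W].
Proof.
apply/setP => A; apply/imsetP/imsetP.
- case=> B; rewrite facets_fam => /imsetP[x xW ->] ->; by exists x.
- case=> x xW ->; exists (F :\ x) => //; rewrite facets_fam; exact: imset_f.
Qed.

Definition pB (Fi : {set 'I_n}) : bool := Fi :|: F == setT.
Definition tA : seq {set option 'I_n} := [seq Some @: (F :\ x) | x <- enum W].
Definition sB : seq {set 'I_n} := filter pB s.
Definition t : seq {set option 'I_n} := tA ++ map (tildeF s) sB.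

Lemma tildeNone Fi : None \in tildeF s Fi. Proof. by rewrite /tildeF !inE. Qed.
Lemma tildeSome Fi z : (Some z \in tildeF s Fi) = (z \in Fi :&: F).
Proof. by rewrite /tildeF in_setU1 /= inSome. Qed.

Lemma sub_B (Fi Fj : {set 'I_n}) : pB Fj -> (forall w, w \in Fi -> w \in F -> w \in Fj) ->
  Fi \subset Fj.
Proof.
move=> /eqP h H; apply/subsetP => w wi; case wF: (w \in F); first exact: H.
have : w \in Fj :|: F by rewrite h inE.
by rewrite inE wF orbF.
Qed.

Lemma tilde_sub (Fi Fj : {set 'I_n}) : pB Fj -> tildeF s Fi \subset tildeF s Fj -> Fi \subset Fj.
Proof.
move=> pj /subsetP H; apply: sub_B => // w wi wF.
by have := H (Some w); rewrite !tildeSome !inE wi wF => /(_ isT) /andP[].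
Qed.

Lemma tA_none A : A \in tA -> None \notin A.
Proof. by case/mapP => x _ ->; rewrite NoneSome. Qed.

Lemma sB_s Fi : Fi \in sB -> (Fi \in s) && pB Fi.
Proof. by rewrite mem_filter andbC. Qed.

Lemma uniq_t : uniq t.
Proof.
rewrite cat_uniq; apply/and3P; split.
- rewrite map_inj_in_uniq ?enum_uniq // => x y; rewrite !mem_enum => xW yW e.
  apply: wall_inj (WF xW) (WF yW) _.
  apply/subsetP => w wx; have : Some w \in Some @: (F :\ x) by rewrite inSome.
  by rewrite e inSome.
- apply/hasPn => A /mapP[Fi _ ->]; apply/negP => /tA_none; by rewrite tildeNone.
- rewrite map_inj_in_uniq ?filter_uniq ?us // => Fi Fj.
  move=> /sB_s /andP[Fis pi] /sB_s /andP[Fjs pj] e.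
  by apply: santi Fis Fjs _; apply: tilde_sub pj _; rewrite e.
Qed.


Lemma some_sub (X Y : {set 'I_n}) : Some @: X \subset Some @: Y -> X \subset Y.
Proof. by move=> /subsetP H; apply/subsetP => w wx; have := H (Some w); rewrite !inSome; apply. Qed.

Lemma some_sub_tilde (X Fj : {set 'I_n}) : Some @: X \subset tildeF s Fj -> X \subset Fj :&: F.
Proof. by move=> /subsetP H; apply/subsetP => w wx; have := H (Some w); rewrite inSome tildeSome; apply. Qed.

Lemma cardD1' (A : {set 'I_n}) x : x \in A -> #|A :\ x| + 1 = #|A|.
Proof. by move=> xA; rewrite (cardsD1 x A) xA addnC. Qed.

Lemma inS_A A : (A \in typeA s) = (A \in tA).
Proof.
rewrite typeAE; apply/imsetP/mapP; case=> x xW ->; exists x => //.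
  by rewrite mem_enum.
by rewrite -mem_enum.
Qed.

Lemma inS_B A : (A \in typeB s) = (A \in map (tildeF s) sB).
Proof.
apply/imsetP/mapP; case=> Fi.
  by rewrite inE => /andP[h1 h2] ->; exists Fi => //; rewrite mem_filter /pB h1 h2.
by rewrite mem_filter => /andP[h1 h2] ->; exists Fi => //; rewrite inE h2; exact: h1.
Qed.

Lemma mem_t A : (A \in t) = (A \in typeA s :|: typeB s).
Proof. by rewrite /t mem_cat inE inS_A inS_B. Qed.

Lemma antiS A B : A \in typeA s :|: typeB s -> B \in typeA s :|: typeB s -> A \subset B -> A = B.
Proof.
rewrite !inE !inS_A !inS_B.
case/orP => [/mapP[x]|/mapP[Fi]]; rewrite ?mem_enum ?mem_filter => xW ->;
 case/orP => [/mapP[y]|/mapP[Fj]]; rewrite ?mem_enum ?mem_filter => yW ->.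
- by move/some_sub => h; rewrite (wall_inj (WF xW) (WF yW) h).
- move/some_sub_tilde/subset_leq_card; case/andP: yW => pj Fjs.
  have := B_small Fjs (eqP pj); have := cardD1' (WF xW); lia.
- by move/subsetP/(_ None (tildeNone _)); rewrite NoneSome.
- case/andP: xW => pi Fis; case/andP: yW => pj Fjs.
  by move/(tilde_sub pj) => h; rewrite (santi Fis Fjs h).
Qed.

Lemma mem_t_facets A : (A \in t) = (A \in facets (DeltaF s)).
Proof. by rewrite /DeltaF facets_gen_set ?mem_t //; exact: antiS. Qed.


Section TypeB.
Variable Fi : {set 'I_n}.
Hypotheses (Fis : Fi \in s) (pi : pB Fi).
Let i := index Fi s.
Let E := tA ++ map (tildeF s) (filter pB (take i s)).

Lemma Fi_nth : nth set0 s i = Fi. Proof. exact: nth_index. Qed.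
Lemma i_lt : i < size s. Proof. by rewrite index_mem. Qed.

Lemma inE_B Fj : Fj \in filter pB (take i s) -> tildeF s Fj \in E.
Proof. by move=> h; rewrite mem_cat map_f ?orbT. Qed.

Lemma B0 : tildeF s Fi :\ None \in gen E.
Proof.
have neq := B_neF (eqP pi); case: (c2 Fis neq) => x xW sub.
apply/genP; exists (Some @: (F :\ x)); first by rewrite mem_cat map_f // mem_enum.
apply/subsetP => -[w|]; rewrite in_setD1 //= tildeSome inSome => wi.
exact: (subsetP sub).
Qed.

Lemma B1 : tildeF s Fi \notin gen E.
Proof.
apply/negP => /genP[C]; rewrite mem_cat => /orP[/tA_none nC|/mapP[Fj]].
  by move/subsetP/(_ None (tildeNone _)); rewrite (negbTE nC).
rewrite mem_filter => /andP[pj Fjt] -> /(tilde_sub pj) sub.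
have Fjs : Fj \in s by apply: mem_take Fjt.
have e := santi Fis Fjs sub; subst Fj.
by have := nth_notin_take set0 us i_lt; rewrite Fi_nth Fjt.
Qed.

Lemma B3back z (Fk : {set 'I_n}) : z \in F -> Fi :\ z \subset Fk -> Fk \in take i s ->
  tildeF s Fi :\ Some z \in gen E.
Proof.
move=> zF sub Fkt.
have pk : pB Fk.
  rewrite /pB eqEsubset subsetT /=; apply/subsetP => w _; rewrite inE.
  case wF: (w \in F); first by rewrite orbT.
  have : w \in Fi :|: F by rewrite (eqP pi) inE.
  rewrite inE wF orbF => wi; rewrite (subsetP sub) //= !inE wi andbT.
  by apply/eqP => e; subst; rewrite zF in wF.
apply/genP; exists (tildeF s Fk); first by apply: inE_B; rewrite mem_filter pk.
apply/subsetP => -[w|]; rewrite in_setD1 ?tildeNone ?andbT //= !tildeSome !inE => /andP[wz /andP[wi wF]].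
by rewrite wF andbT (subsetP sub) // !inE wi andbT.
Qed.

Lemma B3fwd z : z \in F -> tildeF s Fi :\ Some z \in gen E -> Fi :\ z \in gen (take i s).
Proof.
move=> zF /genP[C]; rewrite mem_cat => /orP[/tA_none nC|/mapP[Fj]].
  by move/subsetP/(_ None); rewrite in_setD1 tildeNone (negbTE nC) => /(_ isT).
rewrite mem_filter => /andP[pj Fjt] -> /subsetP sub.
apply/genP; exists Fj => //; apply: sub_B pj _ => w; rewrite !inE => /andP[wz wi] wF.
have := sub (Some w); rewrite in_setD1 !tildeSome !inE wi wF wz andbT /= => /(_ isT).
by case/andP.
Qed.

Lemma B2 B : B \in gen E -> B \subset tildeF s Fi ->
  exists y, [/\ y \in tildeF s Fi, B \subset tildeF s Fi :\ y & tildeF s Fi :\ y \in gen E].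
Proof.
move=> BG BA; case NB: (None \in B); last first.
  exists None; split; rewrite ?tildeNone ?B0 //.
  apply/subsetP => b bB; rewrite in_setD1 (subsetP BA) // andbT.
  by apply/eqP => e; subst; rewrite bB in NB.
case/genP: BG => C; rewrite mem_cat => /orP[/tA_none nC|/mapP[Fj]].
  by move/subsetP/(_ None NB); rewrite (negbTE nC).
rewrite mem_filter => /andP[pj Fjt] -> BC.
have ipos : 0 < i by move: Fjt; case: (i) => //; rewrite take0.
have Dg : Fi :&: Fj \in gen (take i s) by apply/genP; exists Fj => //; exact: subsetIr.
have hi : 0 < i < size s by rewrite ipos i_lt.
have := wallL shs hi Dg; rewrite Fi_nth => /(_ (subsetIl _ _)) [z [zi Dz /genP[Fk Fkt zk]]].
have zF : z \in F.
  case zF: (z \in F) => //.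
  have : z \in Fj :|: F by rewrite (eqP pj) inE.
  rewrite inE zF orbF => zj.
  by have := subsetP Dz z; rewrite !inE zi zj eqxx => /(_ isT).
have zj : z \notin Fj.
  apply/negP => zj; by have := subsetP Dz z; rewrite !inE zi zj eqxx => /(_ isT).
exists (Some z); split.
- by rewrite tildeSome inE zi zF.
- apply/subsetP => b bB; rewrite in_setD1 (subsetP BA) // andbT.
  apply/eqP => e; subst b; have := subsetP BC _ bB.
  by rewrite tildeSome inE (negbTE zj).
- exact: B3back zF zk Fkt.
Qed.

Lemma Bpure : pure_of_dim (gen E :&: powerset (tildeF s Fi)) (fdim (tildeF s Fi) - 1)%R.
Proof. apply: pureL; [exact: B1 | exact: B2]. Qed.

Lemma Bindex : Fi \in sB ->
  nth set0 t (size tA + index Fi sB) = tildeF s Fi /\ take (size tA + index Fi sB) t = E.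
Proof.
move=> FiB; split.
  by rewrite /t nth_cat ltnNge leq_addr /= addKn (nth_map set0) ?index_mem // nth_index.
rewrite /t take_cat ltnNge leq_addr /= addKn -map_take; congr (_ ++ map _ _).
have := @take_filter_index _ set0 pB s i us i_lt; rewrite Fi_nth; apply; exact: pi.
Qed.

End TypeB.

Lemma Apure k : 0 < k < size tA ->
  pure_of_dim (gen (take k t) :&: powerset (nth set0 t k)) (fdim (nth set0 t k) - 1)%R.
Proof.
case/andP => k0 hk.
rewrite /t nth_cat take_cat hk.
have hk' : k < size (enum W) by rewrite /tA size_map in hk.
have [x0 _] : exists x0 : 'I_n, true by move: hk'; case: (enum W) => // a _ _; exists a.
rewrite /tA (nth_map x0) // -map_take.
set x := nth x0 (enum W) k.
have xW : x \in W by rewrite -mem_enum mem_nth.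
have xnt : x \notin take k (enum W) by apply: nth_notin_take; rewrite ?enum_uniq.
have yP : forall C, C \in [seq Some @: (F :\ x) | x <- take k (enum W)] ->
   exists2 y, C = Some @: (F :\ y) & (y \in W) && (y != x).
  move=> C /mapP[y yt ->]; exists y => //.
  rewrite -mem_enum (mem_take yt) /=; apply/eqP => e; subst y; by rewrite yt in xnt.
apply: pureL.
- apply/negP => /genP[C /yP[y -> /andP[yW yx]]] /some_sub sub.
  by move: yx; rewrite (wall_inj (WF xW) (WF yW) sub) eqxx.
- move=> B /genP[C Ct By] BA; case: (yP C Ct) => y Ce /andP[yW yx]; subst C.
  exists (Some y); split.
  + by rewrite inSome in_setD1 yx (WF yW).
  + apply/subsetP => b bB; rewrite in_setD1 (subsetP BA) // andbT.
    apply/eqP => e; subst b; have := subsetP By _ bB; by rewrite inSome !inE eqxx.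
  + apply/genP; exists (Some @: (F :\ y)); first exact: Ct.
    apply/subsetP => b; rewrite in_setD1 => /andP[by' /imsetP[w wx e]]; subst b.
    rewrite inSome; move: wx; rewrite !inE => /andP[_ ->]; rewrite andbT.
    by apply: contra by' => /eqP ->.
Qed.

Lemma shell_t : shelling_cond t.
Proof.
move=> k /andP[k0 kt]; case: (ltnP k (size tA)) => hk.
  by apply: Apure; rewrite k0 hk.
have mB : k - size tA < size sB.
  have e : size t = size tA + size sB.
    by rewrite /t size_cat (size_map (tildeF s)).
  by move: kt; rewrite e; lia.
set Fi := nth set0 sB (k - size tA).
have FiB : Fi \in sB by apply: mem_nth.
have idx : index Fi sB = k - size tA by apply: index_uniq; rewrite // filter_uniq // us.
case/andP: (sB_s FiB) => Fis pi.
have [e1 e2] := Bindex Fis pi FiB.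
rewrite idx subnKC // in e1 e2; rewrite e1 e2.
exact: Bpure.
Qed.

Lemma main_in :
  shellable (DeltaF s) /\
  exists t : seq {set option 'I_n},
    is_shelling (DeltaF s) t /\
    forall i, i < size s -> nth set0 s i :|: lastF s = setT ->
      Gset t (index (tildeF s (nth set0 s i)) t)
      = Some @: (Gset s i :&: lastF s).
Proof.
have shT : is_shelling (DeltaF s) t by split; [exact: uniq_t | exact: mem_t_facets | exact: shell_t].
split; first by exists t.
exists t; split => // i hi hU.
set Fi := nth set0 s i.
have Fis : Fi \in s by apply: mem_nth.
have pi : pB Fi by apply/eqP.
have FiB : Fi \in sB by rewrite mem_filter pi Fis.
have ii : index Fi s = i by apply: index_uniq; rewrite // us.
have [e1 e2] := Bindex Fis pi FiB.
have kt : size tA + index Fi sB < size t.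
  by rewrite /t size_cat (size_map (tildeF s)) ltn_add2l index_mem.
have -> : index (tildeF s Fi) t = size tA + index Fi sB.
  by rewrite -{1}e1 index_uniq // uniq_t.
rewrite GsetE e1 e2 ii GsetE -/Fi.
apply/setP => -[z|]; last first.
  rewrite NoneSome in_set tildeNone /=.
  by have := B0 Fis pi; rewrite ii => ->.
rewrite inSome in_setI [in RHS]in_set [in LHS]in_set tildeSome in_setI.
case zi: (z \in Fi); case zF: (z \in F); rewrite /= ?andbF //.
rewrite andbT; congr negb; apply/idP/idP.
- by move=> h; have := @B3fwd Fi z zF; rewrite ii; apply.
- case/genP => Fk Fkt sub; have := B3back pi zF sub; rewrite ii; apply; exact: Fkt.
Qed.

End Main.

Theorem lemma4p8 (n : nat) (D : {set {set 'I_n}}) (s : seq {set 'I_n}) :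
  is_complex D ->
  is_shelling D s ->
  s != [::] ->
  (forall A, A \in D -> (fdim A <= n%:Z - 3)%R) ->
  shellable (DeltaF s) /\
  exists t : seq {set option 'I_n},
    is_shelling (DeltaF s) t /\
    forall i, i < size s -> nth set0 s i :|: lastF s = setT ->
      Gset t (index (tildeF s (nth set0 s i)) t)
      = Some @: (Gset s i :&: lastF s).
Proof.
move=> Dc Hsh sn Hdim.
exact: (@main_in n D s Hsh sn Hdim).
Qed.
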